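(* Let $m\ge 1$ and let $\{S_n\}$ be a $G(m,\mathbf{p})$ game, i.e. a $\bmod m$ random walk with parameters $p_0,\dots,p_{m-1}\in(0,1)$ and $q_j=1-p_j$. Let $\mathbb{C}$ be the $m\times m$ transition matrix of the walk's congruence classes modulo $m$, and for $i=1,\dots,m$ let $\gamma_{im}$ be the $(i,i)$-th cofactor of $\mathbb{I}-\mathbb{C}$, with $\gamma_{\cdot m}=\gamma_{1m}+\cdots+\gamma_{mm}$. Then, with probability one, \[ \lim_{n\to\infty}\frac{S_n}{n}=\frac{1}{\gamma_{\cdot m}}\sum_{i=1}^m\gamma_{im}\,(p_{i-1}-q_{i-1}). \]
   Context: A $\bmod m$ random walk $G(m,\mathbf{p})$ is a Markov chain on $\mathbb{Z}$ with $S_{n+1}-S_n\in\{-1,+1\}$, $P(S_{n+1}-S_n=1\mid S_n=j)=p_j$, $P(S_{n+1}-S_n=-1\mid S_n=j)=q_j=1-p_j$, where $p_j=p_{j+m}$ for all $j\in\mathbb{Z}$. The matrix $\mathbb{C}$ has rows and columns indexed by $1,\dots,m$, index $i$ corresponding to the residue class $i-1 \bmod m$, and $\mathbb{C}_{ij}=P(S_{n+1}\equiv j-1 \pmod m\mid S_n\equiv i-1\pmod m)$; for $m\ge3$ its only nonzero entries are $\mathbb{C}_{i,i+1}=p_{i-1}$ and $\mathbb{C}_{i,i-1}=q_{i-1}$ (indices taken cyclically mod $m$). The $(i,i)$ cofactor is the determinant of $\mathbb{I}-\mathbb{C}$ with row $i$ and column $i$ deleted (equal to $1$ when $m=1$).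 *)

(* Defs.v *)
From HB Require Import structures.
From mathcomp Require Import all_boot all_order all_algebra.
From mathcomp Require Import all_classical all_reals all_analysis.
Unset Printing Implicit Defensive.
Import Order.TTheory GRing.Theory Num.Theory.
Import numFieldNormedType.Exports.
Local Open Scope classical_set_scope.
Local Open Scope ring_scope.

Definition modm_trans {R : realType} (p : int -> R) (z z' : int) : R :=
  if z' == z + 1 then p z else if z' == z - 1 then 1 - p z else 0.

(* S is a Markov chain on Z (arbitrary initial law) with the transition
   probabilities above, on the probability space (T, P):
   each S n is integer-valued with measurable level sets, and the
   finite-dimensional laws factor through the transition probabilities. *)
Definition is_modm_walk {R : realType} {d : measure_display} {T : measurableType d}
  (P : probability T R) (p : int -> R) (S : nat -> T -> int) : Prop :=
  (forall n (z : int), measurable [set t | S n t = z]) /\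
  (forall (n : nat) (s : nat -> int),
     P [set t | forall k, (k <= n.+1)%N -> S k t = s k] =
     (P [set t | forall k, (k <= n)%N -> S k t = s k] *
      (modm_trans p (s n) (s n.+1))%:E)%E).

(* The matrix C of the congruence classes mod m (m >= 1), indexed by
   'I_(m.-1.+1) (= 'I_m since m >= 1); index i stands for the residue i.
   C i j = P(S_{n+1} = j mod m | S_n = i mod m). *)
Definition modm_C {R : realType} (m : nat) (p : int -> R) : 'M[R]_(m.-1.+1) :=
  \matrix_(i, j) ((if ((i.+1 %% m)%N == j) then p (Posz i) else 0) +
                  (if (((i + m).-1 %% m)%N == j) then 1 - p (Posz i) else 0)).

(* gamma_{im}: the (i,i) cofactor of I - C (equal to 1 when m = 1). *)
Definition modm_gamma {R : realType} (m : nat) (p : int -> R) (i : 'I_(m.-1.+1)) : R :=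
  cofactor (1%:M - modm_C m p) i i.

Definition modm_drift {R : realType} (m : nat) (p : int -> R) : R :=
  (\sum_(i < m.-1.+1) modm_gamma m p i * (p (Posz i) - (1 - p (Posz i)))) /
  (\sum_(i < m.-1.+1) modm_gamma m p i).

(* Main.v *)
Require Import Defs.
From HB Require Import structures.
From mathcomp Require Import all_boot all_order all_algebra.
From mathcomp Require Import all_classical all_reals all_analysis.
From mathcomp Require Import ring lra.
Import Order.TTheory GRing.Theory Num.Theory.
Import numFieldNormedType.Exports.
Local Open Scope classical_set_scope.
Local Open Scope ring_scope.


Section LinAlg.
Variable F : fieldType.

Lemma sum_delta n (j : 'I_n) (f : 'I_n -> F) :
  \sum_l (l == j)%:R * f l = f j.
Proof.
rewrite (bigD1 j) //= eqxx mul1r big1 ?addr0 // => l /negbTE ->; by rewrite mul0r.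
Qed.

Lemma sum_delta1 n (j : 'I_n) : \sum_l (l == j)%:R = 1 :> F.
Proof. by rewrite -[RHS](@sum_delta _ j (fun=> 1)); apply: eq_bigr => l _; rewrite mulr1. Qed.

Lemma det_rows0 n (M : 'M[F]_n.+1) : (forall i, \sum_j M i j = 0) -> \det M = 0.
Proof.
move=> hM; rewrite -det_tr; apply/eqP/det0P.
exists (const_mx 1).
  by apply/negP => /eqP/matrixP/(_ ord0 ord0)/eqP; rewrite !mxE oner_eq0.
apply/matrixP => i j; rewrite !mxE -[RHS](hM j); apply: eq_bigr => k _.
by rewrite !mxE mul1r.
Qed.

Lemma cofactor_indep n (M : 'M[F]_n.+1) i j k :
  (forall r, \sum_l M r l = 0) -> cofactor M i j = cofactor M i k.
Proof.
move=> hM.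
pose M' := \matrix_(r, l) if r == i then (l == j)%:R - (l == k)%:R else M r l.
have hM' : forall r, \sum_l M' r l = 0.
  move=> r; under eq_bigr do rewrite mxE.
  case: eqP => _; last exact: hM.
  by rewrite sumrB !sum_delta1 subrr.
have cof : forall l, cofactor M' i l = cofactor M i l.
  move=> l; rewrite /cofactor; congr (_ * _); congr (\det _).
  apply/matrixP => r s; rewrite !mxE.
  by rewrite eq_sym (negbTE (neq_lift i r)).
have := @det_rows0 _ M' hM'; rewrite (expand_det_row _ i).
under eq_bigr do rewrite cof mxE eqxx mulrBl.
by rewrite sumrB !sum_delta => /eqP; rewrite subr_eq0 => /eqP.
Qed.

Lemma stat_cof n (M : 'M[F]_n.+1) l :
  (forall r, \sum_j M r j = 0) -> \sum_i cofactor M i i * M i l = 0.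
Proof.
move=> hM.
have := congr1 (fun X : 'M[F]_n.+1 => X l l) (mul_adj_mx M).
rewrite det_rows0 // !mxE mul0rn => h; rewrite -[RHS]h.
apply: eq_bigr => i _; rewrite mxE; congr (_ * _); exact: cofactor_indep.
Qed.

Lemma det_aug n (M : 'M[F]_n.+1) :
  (forall r, \sum_j M r j = 0) ->
  \det (\matrix_(i, j) (M i j + (j == ord0)%:R)) = \sum_i cofactor M i i.
Proof.
move=> hM; rewrite (expand_det_col _ ord0).
have cof : forall i, cofactor (\matrix_(i, j) (M i j + (j == ord0)%:R)) i ord0 =
   cofactor M i i.
  move=> i; rewrite (@cofactor_indep _ M i i ord0) //.
  rewrite /cofactor; congr (_ * _); congr (\det _).
  apply/matrixP => r s; rewrite !mxE.
  by rewrite eq_sym (negbTE (neq_lift ord0 s)) addr0.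
under eq_bigr do rewrite cof mxE eqxx mulrDl mul1r.
rewrite big_split /=.
have -> : \sum_i M i ord0 * cofactor M i i = \det M.
  rewrite (expand_det_col _ ord0); apply: eq_bigr => i _; congr (_ * _).
  exact: cofactor_indep.
by rewrite det_rows0 // add0r.
Qed.


End LinAlg.


Lemma sq_le_of_abs {R : realDomainType} {x B : R} : `|x| <= B -> x ^+ 2 <= B ^+ 2.
Proof.
rewrite ler_norml => /andP[h1 h2]; nra.
Qed.

Lemma lem2 (R : realFieldType) (q D1 D0 W B : R) : 0 <= q <= 1 ->
  q * D1 + (1 - q) * D0 = 0 -> `|D1| <= B -> `|D0| <= B ->
  q * (W + D1) ^+ 2 + (1 - q) * (W + D0) ^+ 2 <= W ^+ 2 + B ^+ 2.
Proof.
move=> /andP[q0 q1] m h1 h0.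
have e1 := sq_le_of_abs h1; have e0 := sq_le_of_abs h0.
have -> : q * (W + D1) ^+ 2 + (1 - q) * (W + D0) ^+ 2 =
  W ^+ 2 + 2 * W * (q * D1 + (1 - q) * D0) + (q * D1 ^+ 2 + (1 - q) * D0 ^+ 2) by ring.
rewrite m mulr0 addr0 lerD2l.
nra.
Qed.

Lemma lem4 (R : realFieldType) (q D1 D0 W B : R) : 0 <= q <= 1 ->
  q * D1 + (1 - q) * D0 = 0 -> `|D1| <= B -> `|D0| <= B ->
  q * (W + D1) ^+ 4 + (1 - q) * (W + D0) ^+ 4 <=
  W ^+ 4 + 8 * B ^+ 2 * W ^+ 2 + 3 * B ^+ 4.
Proof.
move=> /andP[q0 q1] m h1 h0.
have B0 : 0 <= B by exact: le_trans (normr_ge0 _) h1.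
have e1 := sq_le_of_abs h1; have e0 := sq_le_of_abs h0.
have f1 : D1 ^+ 4 <= B ^+ 4.
  have : (D1 ^+ 2) ^+ 2 <= (B ^+ 2) ^+ 2.
    by apply: sq_le_of_abs; rewrite ger0_norm ?sqr_ge0.
  by rewrite -!exprM.
have f0 : D0 ^+ 4 <= B ^+ 4.
  have : (D0 ^+ 2) ^+ 2 <= (B ^+ 2) ^+ 2.
    by apply: sq_le_of_abs; rewrite ger0_norm ?sqr_ge0.
  by rewrite -!exprM.
have g : forall D, `|D| <= B -> W * D ^+ 3 <= B ^+ 2 * (W ^+ 2 + B ^+ 2) / 2.
  move=> D hD.
  have eD := sq_le_of_abs hD.
  have a1 : W * D ^+ 3 <= `|W| * B ^+ 3.
    apply: le_trans (ler_norm _) _.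
    rewrite normrM normrX; apply: ler_wpM2l => //.
    by apply: lerXn2r; rewrite ?nnegrE.
  apply: le_trans a1 _.
  have : 0 <= (`|W| - B) ^+ 2 by apply: sqr_ge0.
  have : `|W| ^+ 2 = W ^+ 2 by rewrite real_normK ?num_real.
  move=> wn wb.
  have b2 : 0 <= B ^+ 2 by apply: sqr_ge0.
  rewrite ler_pdivlMr //; nra.
have g1 := g _ h1; have g0 := g _ h0.
have -> : q * (W + D1) ^+ 4 + (1 - q) * (W + D0) ^+ 4 =
  W ^+ 4 + 4 * W ^+ 3 * (q * D1 + (1 - q) * D0)
  + 6 * W ^+ 2 * (q * D1 ^+ 2 + (1 - q) * D0 ^+ 2)
  + 4 * (q * (W * D1 ^+ 3) + (1 - q) * (W * D0 ^+ 3))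
  + (q * D1 ^+ 4 + (1 - q) * D0 ^+ 4) by ring.
rewrite m mulr0 addr0.
have w2 : 0 <= W ^+ 2 by apply: sqr_ge0.
have s2 : q * D1 ^+ 2 + (1 - q) * D0 ^+ 2 <= B ^+ 2 by nra.
have s3 : q * (W * D1 ^+ 3) + (1 - q) * (W * D0 ^+ 3) <= B ^+ 2 * (W ^+ 2 + B ^+ 2) / 2 by nra.
have s4 : q * D1 ^+ 4 + (1 - q) * D0 ^+ 4 <= B ^+ 4 by nra.
nra.
Qed.

Section PathSums.
Context {R : realType} (pr : int -> R).

Definition stp (b : bool) : int := if b then 1 else -1.

Fixpoint endp (z : int) (s : seq bool) : int :=
  match s with [::] => z | b :: s' => endp (z + stp b) s' end.

Fixpoint Ex (n : nat) (z : int) (F : seq bool -> R) : R :=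
  match n with
  | 0 => F [::]
  | n'.+1 => pr z * Ex n' (z + stp true) (fun s => F (true :: s)) +
             (1 - pr z) * Ex n' (z + stp false) (fun s => F (false :: s))
  end.

Lemma Ex_ext n z F G : (forall s, F s = G s) -> Ex n z F = Ex n z G.
Proof.
elim: n z F G => [|n IH] z F G FG /=; first exact: FG.
by congr (_ * _ + _ * _); apply: IH => s; exact: FG.
Qed.

Lemma Ex_lin n z a b F G :
  Ex n z (fun s => a * F s + b * G s) = a * Ex n z F + b * Ex n z G.
Proof.
elim: n z F G => [|n IH] z F G //=.
rewrite (IH _ (fun s => F (true :: s)) (fun s => G (true :: s))).
rewrite (IH _ (fun s => F (false :: s)) (fun s => G (false :: s))).
ring.
Qed.

Lemma Ex_cst n z c : Ex n z (fun _ => c) = c.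
Proof. by elim: n z => [|n IH] z //=; rewrite !IH; ring. Qed.

Fixpoint wt (z : int) (s : seq bool) : R :=
  match s with [::] => 1 | b :: s' => (if b then pr z else 1 - pr z) * wt (z + stp b) s' end.

Fixpoint allseq (n : nat) : seq (seq bool) :=
  if n is n'.+1 then [seq true :: s | s <- allseq n'] ++ [seq false :: s | s <- allseq n']
  else [:: [::]].

Lemma size_allseq n s : s \in allseq n -> size s = n.
Proof.
elim: n s => [|n IH] s /=; first by rewrite inE => /eqP ->.
rewrite mem_cat => /orP[] /mapP[s' hs' ->] /=; by rewrite IH.
Qed.

Lemma uniq_allseq n : uniq (allseq n).
Proof.
elim: n => [|n IH] //=.
rewrite cat_uniq !map_inj_uniq //; try by move=> a b [].
rewrite IH /= andbT; apply/hasPn => x /mapP[s' _ ->].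
by apply/mapP => -[s'' _].
Qed.

Lemma Ex_sum n z F : Ex n z F = \sum_(s <- allseq n) wt z s * F s.
Proof.
elim: n z F => [|n IH] z F; first by rewrite /= big_seq1 mul1r.
rewrite /= big_cat !big_map /= !IH !big_distrr /=.
by congr (_ + _); apply: eq_bigr => s _; rewrite mulrA.
Qed.

Lemma wt_rcons z s b : wt z (rcons s b) =
  wt z s * (if b then pr (endp z s) else 1 - pr (endp z s)).
Proof.
elim: s z => [|a s IH] z /=; first by rewrite mulr1 mul1r.
by rewrite IH mulrA.
Qed.

Hypothesis pr01 : forall z, 0 <= pr z <= 1.

Lemma wt_ge0 z s : 0 <= wt z s.
Proof.
elim: s z => [|a s IH] z //=.
have /andP[h0 h1] := pr01 z.
apply: mulr_ge0 => //; case: a => //; by rewrite subr_ge0.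
Qed.

Lemma Ex_le n z F G : (forall s, F s <= G s) -> Ex n z F <= Ex n z G.
Proof.
elim: n z F G => [|n IH] z F G FG /=; first exact: FG.
have /andP[h0 h1] := pr01 z.
apply: lerD; apply: ler_wpM2l; rewrite ?subr_ge0 //; apply: IH => s; exact: FG.
Qed.

Lemma endp_rcons z s b : endp z (rcons s b) = endp z s + stp b.
Proof. by elim: s z => [|a s IH] z //=. Qed.

Lemma Ex_last n z F : Ex n.+1 z F =
  Ex n z (fun s => pr (endp z s) * F (rcons s true) +
                   (1 - pr (endp z s)) * F (rcons s false)).
Proof.
elim: n z F => [|n IH] z F; first by [].
transitivity (pr z * Ex n.+1 (z + stp true) (fun s => F (true :: s)) +
  (1 - pr z) * Ex n.+1 (z + stp false) (fun s => F (false :: s))); first by [].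
by rewrite (IH (z + stp true)) (IH (z + stp false)).
Qed.


Lemma Ex_add n z F G : Ex n z (fun s => F s + G s) = Ex n z F + Ex n z G.
Proof.
have := Ex_lin n z 1 1 F G; rewrite !mul1r => <-.
by apply: Ex_ext => s; rewrite !mul1r.
Qed.

Lemma Ex_scale n z a F : Ex n z (fun s => a * F s) = a * Ex n z F.
Proof.
have := Ex_lin n z a 0 F F; rewrite mul0r addr0 => <-.
by apply: Ex_ext => s; rewrite mul0r addr0.
Qed.

Section Moments.
Variables (phi : int -> R) (c B : R).
Hypothesis mart : forall y, pr y * phi (y + stp true) + (1 - pr y) * phi (y + stp false) = phi y + c.
Hypothesis bnd : forall y b, `|phi (y + stp b) - phi y - c| <= B.

Definition Wf z s := phi (endp z s) - phi z - (size s)%:R * c.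

Lemma Wf_rcons z s b : Wf z (rcons s b) =
  Wf z s + (phi (endp z s + stp b) - phi (endp z s) - c).
Proof. rewrite /Wf endp_rcons size_rcons -natr1; ring. Qed.

Lemma Wf_nil z : Wf z [::] = 0.
Proof. by rewrite /Wf /= mul0r !subrr. Qed.

Lemma mart0 y : pr y * (phi (y + stp true) - phi y - c) +
  (1 - pr y) * (phi (y + stp false) - phi y - c) = 0.
Proof.
have := mart y => e.
have -> : pr y * (phi (y + stp true) - phi y - c) +
  (1 - pr y) * (phi (y + stp false) - phi y - c) =
  (pr y * phi (y + stp true) + (1 - pr y) * phi (y + stp false)) - (phi y + c) by ring.
by rewrite e subrr.
Qed.

Lemma mom2 n z : Ex n z (fun s => Wf z s ^+ 2) <= n%:R * B ^+ 2.
Proof.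
elim: n => [|n IH]; first by rewrite /= Wf_nil expr0n /= mul0r.
rewrite Ex_last.
apply: (@le_trans _ _ (Ex n z (fun s => Wf z s ^+ 2 + B ^+ 2))).
  apply: Ex_le => s; rewrite !Wf_rcons.
  apply: lem2; [exact: pr01|exact: mart0|exact: bnd|exact: bnd].
rewrite Ex_add Ex_cst -natr1 mulrDl mul1r lerD2r; exact: IH.
Qed.

Lemma mom4 n z : Ex n z (fun s => Wf z s ^+ 4) <= 4 * (n%:R ^+ 2) * B ^+ 4.
Proof.
elim: n => [|n IH]; first by rewrite /= Wf_nil expr0n /= expr0n /= mulr0 mul0r.
rewrite Ex_last.
apply: (@le_trans _ _ (Ex n z (fun s => Wf z s ^+ 4 + 8 * B ^+ 2 * Wf z s ^+ 2 + 3 * B ^+ 4))).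
  apply: Ex_le => s; rewrite !Wf_rcons.
  apply: lem4; [exact: pr01|exact: mart0|exact: bnd|exact: bnd].
rewrite Ex_add Ex_add Ex_cst Ex_scale.
have h2 := mom2 n z.
have B2 : 0 <= B ^+ 2 by apply: sqr_ge0.
have n0 : 0 <= n%:R :> R by [].
have : 8 * B ^+ 2 * Ex n z (fun s => Wf z s ^+ 2) <= 8 * B ^+ 2 * (n%:R * B ^+ 2).
  by apply: ler_wpM2l => //; rewrite mulr_ge0.
rewrite -natr1.
have -> : B ^+ 4 = B ^+ 2 * B ^+ 2 by rewrite -exprD.
nra.
Qed.

End Moments.
End PathSums.
Arguments wt {R} pr z s.
Arguments Ex {R} pr n z F.
Arguments Wf {R} phi c z s.
Arguments size_allseq {n s}.
Arguments mom4 {R pr} pr01 {phi c B} mart bnd n z.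
Arguments wt_ge0 {R pr} pr01 z s.


Lemma fmax {R : realDomainType} {n} (h : 'I_n.+1 -> R) : exists im, forall j, h j <= h im.
Proof.
case: (@arg_maxP _ _ _ ord0 xpredT h isT) => im _ him.
by exists im => j; apply: him.
Qed.
Lemma fmin {R : realDomainType} {n} (h : 'I_n.+1 -> R) : exists im, forall j, h im <= h j.
Proof.
case: (@arg_minP _ _ _ ord0 xpredT h isT) => im _ him.
by exists im => j; apply: him.
Qed.

Section Specific.
Variables (R : realType) (m : nat) (p : int -> R).
Hypothesis m0 : (0 < m)%N.
Local Notation N := m.-1.+1.

Lemma NE : N = m. Proof. exact: prednK. Qed.

Lemma ltm (i : 'I_N) : (i < m)%N.
Proof. by case: i => j /= hj; move: hj; rewrite NE. Qed.

Lemma ltN k : (k < m)%N -> (k < N)%N.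
Proof. by rewrite NE. Qed.

Definition nxt (i : 'I_N) : 'I_N := inord (i.+1 %% m).
Definition prv (i : 'I_N) : 'I_N := inord ((i + m).-1 %% m).

Lemma sum_if_nat (k : nat) (a : R) (h : 'I_N -> R) : (k < m)%N ->
  \sum_(j < N) (if k == nat_of_ord j then a else 0) * h j = a * h (inord k).
Proof.
move=> km; have kN : (k < N)%N by rewrite NE.
rewrite (bigD1 (inord k)) //= inordK // eqxx big1 ?addr0 // => j hj.
case: eqP => [e|]; last by rewrite mul0r.
by move: hj; rewrite e inord_val eqxx.
Qed.

Lemma C_mul (h : 'I_N -> R) i :
  \sum_j modm_C m p i j * h j = p i * h (nxt i) + (1 - p i) * h (prv i).
Proof.
under eq_bigr do rewrite mxE mulrDl.
rewrite big_split /= !sum_if_nat // ltn_pmod //.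
Qed.

Lemma I_mul (h : 'I_N -> R) i : \sum_j (1%:M : 'M[R]_N) i j * h j = h i.
Proof.
rewrite (bigD1 i) //= mxE eqxx mulr1n mul1r big1 ?addr0 // => j hj.
by rewrite mxE eq_sym (negbTE hj) mulr0n mul0r.
Qed.

Definition Amat : 'M[R]_N := 1%:M - modm_C m p.

Lemma A_mul (h : 'I_N -> R) i :
  \sum_j Amat i j * h j = h i - (p i * h (nxt i) + (1 - p i) * h (prv i)).
Proof.
have e : forall j, Amat i j = (1%:M : 'M[R]_N) i j - modm_C m p i j.
  by move=> j; rewrite /Amat [LHS]mxE [X in _ + X]mxE.
under eq_bigr do rewrite e mulrBl.
by rewrite sumrB I_mul C_mul.
Qed.

Lemma A_rows i : \sum_j Amat i j = 0.
Proof.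
have := A_mul (fun=> 1) i; under eq_bigr do rewrite mulr1.
move=> ->; ring.
Qed.


Hypothesis p01 : forall i : int, 0 < p i < 1.

Lemma nxtE (i : 'I_N) : nat_of_ord (nxt i) = (i.+1 %% m)%N.
Proof. by rewrite /nxt inordK // ltN // ltn_pmod. Qed.

Lemma maxp (h : 'I_N -> R) :
  (forall i, h i - (p i * h (nxt i) + (1 - p i) * h (prv i)) + h ord0 = 0) ->
  forall i, h i = 0.
Proof.
move=> hA.
have [im him] := fmax h; have [imn hin] := fmin h.
have c0 : h ord0 = 0.
  have e1 := hA im; have e2 := hA imn.
  have /andP[a1 a2] := p01 im; have /andP[b1 b2] := p01 imn.
  have f1 : p im * h (nxt im) <= p im * h im by apply: ler_wpM2l; [lra|exact: him].
  have f2 : (1 - p im) * h (prv im) <= (1 - p im) * h im by apply: ler_wpM2l; [lra|exact: him].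
  have f3 : p imn * h imn <= p imn * h (nxt imn) by apply: ler_wpM2l; [lra|exact: hin].
  have f4 : (1 - p imn) * h imn <= (1 - p imn) * h (prv imn) by apply: ler_wpM2l; [lra|exact: hin].
  lra.
have step : forall i, h i = h im -> h (nxt i) = h im.
  move=> i hi; have e := hA i; rewrite c0 addr0 hi in e.
  have /andP[a1 a2] := p01 i.
  have g1 := him (nxt i); have g2 := him (prv i).
  apply/eqP; rewrite eq_le g1 /=.
  nra.
have all : forall k, h (inord ((im + k) %% m)) = h im.
  elim => [|k IH].
    by rewrite addn0 modn_small ?inord_val // ltm.
  have := step _ IH; rewrite /nxt inordK; last by rewrite ltN // ltn_pmod.
  by rewrite -addn1 modnDml addn1 addnS.
have allj : forall j, h j = h im.
  move=> j; rewrite -(all (j + m - im)%N).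
  have jm : (im <= j + m)%N.
    by apply: leq_trans (ltnW (ltm im)) _; rewrite leq_addl.
  rewrite addnBCA // ?leqnn // ?subnn ?addn0.
  by rewrite modnDr modn_small ?inord_val // ltm.
move=> i; by rewrite allj -(allj ord0).
Qed.

Definition Baug : 'M[R]_N := \matrix_(i, j) (Amat i j + (j == ord0)%:R).

Lemma Baug_mul (h : 'I_N -> R) i :
  \sum_j Baug i j * h j = \sum_j Amat i j * h j + h ord0.
Proof.
under eq_bigr do rewrite mxE mulrDl.
by rewrite big_split /= (@sum_delta R _ ord0 h).
Qed.

Lemma det_Baug : \det Baug = \sum_i modm_gamma m p i.
Proof. exact: (@det_aug R _ Amat A_rows). Qed.

Lemma sumgamma_neq0 : \sum_i modm_gamma m p i != 0.
Proof.
apply/negP => /eqP s0.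
have : \det Baug^T == 0 by rewrite det_tr det_Baug s0.
case/det0P => v vn0 vB.
have hv : forall i, v ord0 i - (p i * v ord0 (nxt i) + (1 - p i) * v ord0 (prv i))
   + v ord0 ord0 = 0.
  move=> i; have := congr1 (fun X : 'rV[R]_N => X ord0 i) vB.
  rewrite !mxE => e; rewrite -A_mul -Baug_mul -[RHS]e.
  by apply: eq_bigr => j _; rewrite [Baug^T j i]mxE mulrC.
have v0 := @maxp (fun j => v ord0 j) hv.
move/negP: vn0; apply; apply/eqP/matrixP => a b.
by rewrite (ord1 a) v0 mxE.
Qed.

Lemma poisson : exists hv : 'I_N -> R, forall i,
  hv i - (p i * hv (nxt i) + (1 - p i) * hv (prv i)) =
  (p i - (1 - p i)) - modm_drift m p.
Proof.
have uB : Baug \in unitmx by rewrite unitmxE unitfE det_Baug sumgamma_neq0.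
pose g : 'cV[R]_N := \col_i ((p i - (1 - p i)) - modm_drift m p).
have Bh := mulKVmx uB g.
pose hh := fun j => (invmx Baug *m g) j ord0.
have row : forall i, \sum_j Amat i j * hh j + hh ord0 = g i ord0.
  move=> i; rewrite -Baug_mul; have := congr1 (fun X : 'cV[R]_N => X i ord0) Bh.
  by rewrite mxE.
have h00 : hh ord0 = 0.
  have : \sum_i modm_gamma m p i * (\sum_j Amat i j * hh j + hh ord0) =
         \sum_i modm_gamma m p i * g i ord0 by apply: eq_bigr => i _; rewrite row.
  under eq_bigr do rewrite mulrDr.
  rewrite big_split /=.
  have -> : \sum_i modm_gamma m p i * (\sum_j Amat i j * hh j) = 0.
    under eq_bigr do rewrite big_distrr /=.
    rewrite exchange_big /= big1 // => j _.
    have st := @stat_cof R _ Amat j A_rows.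
    transitivity ((\sum_i cofactor Amat i i * Amat i j) * hh j); last by rewrite st mul0r.
    by rewrite big_distrl; apply: eq_bigr => i _; rewrite mulrA.
  have e2 : \sum_i modm_gamma m p i * g i ord0 = 0.
    under eq_bigr do rewrite mxE mulrBr.
    rewrite sumrB -big_distrl /= /modm_drift mulrC divfK ?sumgamma_neq0 //.
    by rewrite subrr.
  rewrite e2 add0r -big_distrl /= => /eqP; rewrite mulf_eq0 (negbTE sumgamma_neq0) /=.
  by move/eqP.
exists hh => i; have := row i; rewrite h00 addr0 A_mul mxE => ->.
by [].
Qed.

End Specific.


Lemma inv_sq_sum (R : realFieldType) N :
  \sum_(0 <= k < N) 1 / (k.+1%:R ^+ 2) <= 2 - 2 / (N.+1)%:R :> R.
Proof.
elim: N => [|N IH]; first by rewrite big_geq // divr1 subrr.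
rewrite big_nat_recr //=; apply: le_trans (lerD IH (lexx _)) _.
have x0 : 0 < (N.+1)%:R :> R by rewrite ltr0n.
set x := (N.+1)%:R : R.
have -> : (N.+2)%:R = x + 1 :> R by rewrite /x -natr1.
rewrite -addrA lerD2l.
have x1 : 1 <= x by rewrite /x ler1n.
have h : - (2 / x) + 1 / x ^+ 2 - - (2 / (x + 1)) = - (x - 1) / (x ^+ 2 * (x + 1)).
  field; have hN : 0 <= N%:R :> R by [].
  by apply/andP; split; apply/eqP => h; lra.
rewrite -subr_le0 h.
rewrite mulNr oppr_le0; apply: divr_ge0; first by rewrite subr_ge0.
by rewrite mulr_ge0 ?exprn_ge0 // ?addr_ge0 // ltW.
Qed.


Section Walk.
Variables (R : realType) (d : measure_display) (T : measurableType d)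
  (P : probability T R) (p : int -> R) (S : nat -> T -> int).
Hypothesis hW : is_modm_walk P p S.
Variable z0 : int.

Definition sp (s : seq bool) (k : nat) : int := endp z0 (take k s).
Definition pth (n : nat) (s : seq bool) :=
  [set t | forall k, (k <= n)%N -> S k t = sp s k].

Lemma mS k z : measurable [set t | S k t = z].
Proof. exact: hW.1. Qed.

Lemma pth_meas n s : measurable (pth n s).
Proof.
have -> : pth n s = \bigcap_(k in [set k | (k <= n)%N]) [set t | S k t = sp s k].
  by apply/seteqP; split => t /= h k hk; apply: h.
apply: bigcap_measurableType => k _; exact: mS.
Qed.

Lemma sp0 s : sp s 0 = z0.
Proof. by rewrite /sp take0. Qed.

Lemma sp_size s : sp s (size s) = endp z0 s.
Proof. by rewrite /sp take_size. Qed.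

Lemma sp_rcons s b k : (k <= size s)%N -> sp (rcons s b) k = sp s k.
Proof. by move=> hk; rewrite /sp -cats1 takel_cat. Qed.

Lemma sp_rcons_last s b : sp (rcons s b) (size s).+1 = endp z0 s + stp b.
Proof. by rewrite /sp take_oversize ?size_rcons // endp_rcons. Qed.

Lemma sp_step s i : (i < size s)%N -> sp s i.+1 = sp s i + stp (nth false s i).
Proof. by move=> hi; rewrite /sp (take_nth false hi) endp_rcons. Qed.

Lemma stp_inj : injective stp.
Proof. by case; case. Qed.

Lemma sp_inj s s' : size s = size s' ->
  (forall k, (k <= size s)%N -> sp s k = sp s' k) -> s = s'.
Proof.
move=> hs h; apply: (@eq_from_nth _ false) => // i hi.
have e1 := @sp_step s i hi; have hi' := hi; rewrite hs in hi'; have e2 := @sp_step s' i hi'.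
have := h i.+1 hi; rewrite e1 e2 h ?(ltnW hi) // => /addrI.
exact: stp_inj.
Qed.

Lemma pth_disj s s' : size s = size s' -> s != s' ->
  pth (size s) s `&` pth (size s) s' = set0.
Proof.
move=> hs ne; apply/seteqP; split => // t [h1 h2].
move/negP: ne; apply; apply/eqP; apply: sp_inj => // k hk.
by rewrite -h1 // h2.
Qed.

Lemma in_bigsetU (F : seq bool -> set T) l (Q : pred (seq bool)) t :
  (\big[setU/set0]_(s <- l | Q s) F s) t -> exists s, [/\ s \in l, Q s & F s t].
Proof.
elim: l => [|x l IH]; first by rewrite big_nil.
rewrite big_cons; case: ifP => hQ.
  case=> [h|/IH [s [h1 h2 h3]]]; first by exists x; rewrite mem_head.
  by exists s; rewrite in_cons h1 orbT.
by move/IH => [s [h1 h2 h3]]; exists s; rewrite in_cons h1 orbT.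
Qed.

Lemma in_bigsetU2 (F : seq bool -> set T) l (Q : pred (seq bool)) t s :
  s \in l -> Q s -> F s t -> (\big[setU/set0]_(s <- l | Q s) F s) t.
Proof.
elim: l => [|x l IH] //; rewrite in_cons big_cons => /orP[/eqP <-|hl] hQ hF.
  by rewrite hQ; left.
by case: ifP => _; [right|]; apply: IH.
Qed.

Arguments in_bigsetU {F l Q t}.
Arguments in_bigsetU2 {F l Q t s}.

Lemma measure_seq (F : seq bool -> set T) (l : seq (seq bool)) (Q : pred (seq bool)) :
  uniq l -> (forall s, measurable (F s)) ->
  {in l &, forall s s', s != s' -> F s `&` F s' = set0} ->
  P (\big[setU/set0]_(s <- l | Q s) F s) = (\sum_(s <- l | Q s) P (F s))%E.
Proof.
elim: l => [|x l IH] /= ul mF dF; first by rewrite !big_nil measure0.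
move: ul => /andP[xl ul].
have dF' : {in l &, forall s s', s != s' -> F s `&` F s' = set0}.
  by move=> s s' hs hs'; apply: dF; rewrite in_cons ?hs ?hs' orbT.
rewrite !big_cons; case: ifP => hQ; last exact: IH.
have mB : measurable (\big[setU/set0]_(s <- l | Q s) F s) by apply: bigsetU_measurable.
rewrite measureU //; first by congr (adde _ _); exact: IH.
apply/seteqP; split => // t [h1 /in_bigsetU [s [h2 h3 h4]]].
have ne : x != s by apply/eqP => e; move: xl; rewrite e h2.
have hs : s \in x :: l by rewrite in_cons h2 orbT.
have := dF x s (mem_head _ _) hs ne.
by move/seteqP => [hsub _]; exact: (hsub t (conj h1 h4)).
Qed.

Lemma trans_stp x b : modm_trans p x (x + stp b) = if b then p x else 1 - p x.
Proof.
rewrite /modm_trans; case: b => /=; first by rewrite eqxx.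
have -> : (x + -1 == x + 1) = false by rewrite (inj_eq (addrI x)).
by rewrite eqxx.
Qed.

Lemma pth0 : pth 0 [::] = [set t | S 0 t = z0].
Proof.
apply/seteqP; split => t /=; first by move/(_ 0%N isT); rewrite sp0.
by move=> h k; rewrite leqn0 => /eqP ->; rewrite sp0.
Qed.

Lemma P_pth s : P (pth (size s) s) = (P [set t | S 0 t = z0] * (wt p z0 s)%:E)%E.
Proof.
elim/last_ind: s => [|s b IH]; first by rewrite pth0 /= mule1.
rewrite size_rcons.
have := hW.2 (size s) (sp (rcons s b)).
rewrite -/(pth (size s).+1 (rcons s b)) => ->.
have -> : [set t | forall k, (k <= size s)%N -> S k t = sp (rcons s b) k] = pth (size s) s.
  apply/seteqP; split => t /= h k hk; first by rewrite h // sp_rcons.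
  by rewrite sp_rcons // h.
rewrite IH sp_rcons // sp_size sp_rcons_last trans_stp wt_rcons.
by rewrite -muleA -EFinM.
Qed.

Definition P0 := fine (P [set t | S 0 t = z0]).

Lemma P0E : P [set t | S 0 t = z0] = P0%:E.
Proof. by rewrite /P0 fineK // (fin_num_measure P _ (mS 0 z0)). Qed.

Lemma P0_ge0 : 0 <= P0.
Proof. by rewrite /P0 fine_ge0. Qed.

Lemma P0_le1 : P0 <= 1.
Proof. by rewrite -lee_fin -P0E probability_le1 //; exact: mS. Qed.

Lemma P_event (Q : pred (seq bool)) n :
  P (\big[setU/set0]_(s <- allseq n | Q s) pth n s) =
  (P0 * \sum_(s <- allseq n | Q s) wt p z0 s)%:E.
Proof.
have dj : {in allseq n &, forall s s', s != s' -> pth n s `&` pth n s' = set0}.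
  move=> s s' hs hs' ne; rewrite -(size_allseq hs) pth_disj //.
  by rewrite (size_allseq hs) (size_allseq hs').
rewrite (@measure_seq (pth n) (allseq n) Q (uniq_allseq n) (pth_meas n) dj).
rewrite big_seq_cond (eq_bigr (fun s => (P0 * wt p z0 s)%:E)); last first.
  move=> s /andP[hs _]; have := P_pth s; rewrite (size_allseq hs) => ->.
  by rewrite P0E.
by rewrite sumEFin -big_seq_cond big_distrr.
Qed.


Hypothesis p01 : forall z, 0 <= p z <= 1.

Definition G n := \big[setU/set0]_(s <- allseq n) pth n s.

Lemma G_meas n : measurable (G n).
Proof. by apply: bigsetU_measurable => s _; exact: pth_meas. Qed.

Lemma P_G n : P (G n) = P [set t | S 0 t = z0].
Proof.
rewrite /G (P_event xpredT n) P0E.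
have := Ex_sum p n z0 (fun=> 1); rewrite Ex_cst => e.
congr (_%:E); rewrite -[RHS]mulr1; congr (_ * _); rewrite [RHS]e.
by apply: eq_bigr => s _; rewrite mulr1.
Qed.

Lemma G_sub n : G n `<=` [set t | S 0 t = z0].
Proof.
move=> t /in_bigsetU [s [_ _ h]]; rewrite /= (h 0%N isT); exact: sp0.
Qed.

Lemma null1 n : P ([set t | S 0 t = z0] `\` G n) = 0%E.
Proof.
have lt : (P [set t | S 0 t = z0] < +oo)%E by rewrite P0E ltry.
rewrite (measureD (mS 0 z0) (G_meas n) lt).
rewrite (setIidr (@G_sub n)).
change (P [set t | S 0 t = z0] - P (G n) = 0)%E.
by rewrite P_G P0E subee.
Qed.

Section Bad.
Variables (phi : int -> R) (c Bc : R).
Hypothesis mart : forall y, p y * phi (y + stp true) + (1 - p y) * phi (y + stp false) = phi y + c.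
Hypothesis bnd : forall y b, `|phi (y + stp b) - phi y - c| <= Bc.

Definition Bn n e := \big[setU/set0]_(s <- allseq n | (n%:R * e < `|Wf phi c z0 s|)) pth n s.

Lemma Bn_meas n e : measurable (Bn n e).
Proof. by apply: bigsetU_measurable => s _; exact: pth_meas. Qed.

Lemma P_Bn n e : 0 < e -> (0 < n)%N ->
  (P (Bn n e) <= ((4 * Bc ^+ 4 / e ^+ 4) / n%:R ^+ 2)%:E)%E.
Proof.
move=> e0 n0; rewrite /Bn P_event lee_fin.
have ne0 : 0 < n%:R * e by rewrite mulr_gt0 // ltr0n.
set Sg := \sum_(s <- allseq n | _) _.
have hS : Sg <= Ex p n z0 (fun s => Wf phi c z0 s ^+ 4) / (n%:R * e) ^+ 4.
  rewrite Ex_sum big_distrl /= /Sg big_mkcond /=; apply: ler_sum => s _.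
  have w0 := wt_ge0 p01 z0 s.
  case: ifP => hQ.
    rewrite -mulrA; apply: ler_peMr => //.
    rewrite ler_pdivlMr ?exprn_gt0 // mul1r.
    have h2 : (n%:R * e) ^+ 2 <= Wf phi c z0 s ^+ 2.
      have := ltW hQ => hQ'.
      rewrite -[X in _ <= X]real_normK ?num_real //.
      by apply: lerXn2r => //; rewrite nnegrE ltW.
    have -> : (n%:R * e) ^+ 4 = ((n%:R * e) ^+ 2) ^+ 2 by rewrite -exprM.
    have -> : Wf phi c z0 s ^+ 4 = (Wf phi c z0 s ^+ 2) ^+ 2 by rewrite -exprM.
    by apply: lerXn2r => //; rewrite nnegrE ?sqr_ge0.
  rewrite -mulrA; apply: mulr_ge0 => //; apply: divr_ge0; last by rewrite exprn_ge0 // ltW.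
  by rewrite (_ : 4%N = (2 * 2)%N) // exprM sqr_ge0.
have hE := mom4 p01 mart bnd n z0.
have S0 : 0 <= Sg by rewrite /Sg; apply: sumr_ge0 => s _; exact: wt_ge0.
apply: le_trans (_ : Sg <= _).
  by rewrite -[X in _ <= X]mul1r; apply: ler_wpM2r => //; exact: P0_le1.
apply: le_trans hS _.
have n0' : n%:R != 0 :> R by rewrite pnatr_eq0 -lt0n.
have e0' : e != 0 by rewrite gt_eqF.
have -> : (4 * Bc ^+ 4 / e ^+ 4) / n%:R ^+ 2 = (4 * n%:R ^+ 2 * Bc ^+ 4) / (n%:R * e) ^+ 4.
  by field; rewrite n0' e0'.
apply: ler_wpM2r => //; by rewrite invr_ge0 exprn_ge0 // ltW.
Qed.


Lemma ser_fin e : 0 < e -> (\sum_(k <oo) P (Bn k.+1 e) < +oo)%E.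
Proof.
move=> e0.
set K := 4 * Bc ^+ 4 / e ^+ 4.
have B4 : 0 <= Bc ^+ 4 by rewrite (_ : 4%N = (2 * 2)%N) // exprM sqr_ge0.
have e4 : 0 < e ^+ 4 by rewrite exprn_gt0.
have K0 : 0 <= K by apply: divr_ge0; [apply: mulr_ge0|apply: ltW].
apply: (le_lt_trans _ (ltry (2 * K))).
apply: (@le_trans _ _ (\sum_(k <oo) (K / (k.+1%:R ^+ 2))%:E)%E).
  apply: lee_nneseries => [k _ _|k _]; first exact: measure_ge0.
  exact: P_Bn.
apply: lime_le.
  apply: (@is_cvg_nneseries R _ xpredT 0%N) => k _ _.
  by rewrite lee_fin divr_ge0 // ?exprn_ge0.
apply: nearW => N; rewrite sumEFin lee_fin.
have -> : \sum_(0 <= k < N) K / k.+1%:R ^+ 2 = K * \sum_(0 <= k < N) 1 / k.+1%:R ^+ 2.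
  by rewrite big_distrr; apply: eq_bigr => k _; rewrite mul1r.
rewrite mulrC; apply: ler_wpM2r => //.
apply: le_trans (inv_sq_sum _ N) _.
rewrite lerBlDr lerDl; apply: divr_ge0 => //.
Qed.

Lemma negl1 : P.-negligible (\bigcup_n ([set t | S 0 t = z0] `\` G n)).
Proof.
apply: negligible_bigcup => n; apply/negligibleP; last exact: null1.
by apply: measurableD; [exact: mS|exact: G_meas].
Qed.

Lemma negl2 : P.-negligible (\bigcup_j lim_sup_set (fun k => Bn k.+1 (j.+1%:R)^-1)).
Proof.
apply: negligible_bigcup => j.
have mF : forall k, measurable (Bn k.+1 (j.+1%:R)^-1) by move=> k; exact: Bn_meas.
apply/negligibleP.
  rewrite /lim_sup_set; apply: bigcap_measurable => // k _.
  by apply: bigcup_measurable => i _.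
apply: lim_sup_set_cvg0 => //; apply: ser_fin.
by rewrite invr_gt0 ltr0n.
Qed.

Variable Hb : R.
Hypothesis phiH : forall z, `|phi z - z%:~R| <= Hb.

Lemma bad_negl : P.-negligible
  [set t | S 0 t = z0 /\ ~ ((fun n : nat => (S n t)%:~R / n%:R : R) @ \oo --> c)].
Proof.
apply: (negligibleS _ (negligibleU negl1 negl2)) => t [h0 hnc].
apply: contrapT => hn; apply: hnc.
have hG : forall n, G n t.
  move=> n; apply: contrapT => hg; apply: hn; left; exists n => //.
have hB : forall j, exists n0, forall k, (n0 <= k)%N -> ~ Bn k.+1 (j.+1%:R)^-1 t.
  move=> j; apply: contrapT => hj; apply: hn; right; exists j => // n _.
  apply: contrapT => hk; apply: hj; exists n => k nk hF; apply: hk; exists k => //.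
have key : forall n e, ~ Bn n e t ->
    `|phi (S n t) - phi z0 - n%:R * c| <= n%:R * e.
  move=> n e hBn; have [s [hs _ hp]] := in_bigsetU (hG n).
  have sz := size_allseq hs.
  have : ~ (n%:R * e < `|Wf phi c z0 s|).
    by move=> hq; apply: hBn; exact: (in_bigsetU2 hs hq hp).
  move/negP; rewrite -leNgt /Wf sz.
  by rewrite (hp n (leqnn n)) -sz sp_size sz.
apply/cvgrPdist_le => eps eps0.
set j := Num.Def.trunc (2 / eps).
set J := (j.+1)%:R : R.
have J0 : 0 < J by rewrite ltr0n.
have hJ : 2 < J * eps by rewrite -ltr_pdivrMr // truncnS_gt.
set e := J^-1.
have he : e < eps / 2.
  by rewrite /e -[X in X < _]mul1r ltr_pdivrMr //; lra.
set K := Hb + `|phi z0|.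
have Hb0 : 0 <= Hb by apply: le_trans (phiH 0).
have K0 : 0 <= K by rewrite /K addr_ge0.
set n1 := Num.Def.trunc (2 * K / eps).
have [n0 hn0] := hB j.
exists (maxn n0.+1 n1.+1); first by [].
move=> n /=; rewrite geq_max => /andP[hn0' hn1].
have n0' : (0 < n)%N by apply: leq_trans hn0'.
have npos : 0 < n%:R :> R by rewrite ltr0n.
have hk : `|phi (S n t) - phi z0 - n%:R * c| <= n%:R * e.
  apply: key; move: hn0' n0'; case: n {hn1 npos} => // k hk _; exact: hn0.
have hK : 2 * K < n%:R * eps.
  rewrite -ltr_pdivrMr //; apply: lt_le_trans (truncnS_gt _) _.
  by rewrite ler_nat.
set X := S n t.
have hX := phiH X.
have eq : c - X%:~R / n%:R =
  - ((X%:~R - phi X) + (phi X - phi z0 - n%:R * c) + phi z0) / n%:R.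
  by field; rewrite gt_eqF.
rewrite eq mulNr normrN normf_div (gtr0_norm npos) ler_pdivrMr //.
apply: le_trans (ler_normD _ _) _.
apply: le_trans (lerD (ler_normD _ _) (lexx _)) _.
have h1 : `|X%:~R - phi X| <= Hb by rewrite distrC.
have h2 : n%:R * e <= n%:R * (eps / 2) by apply: ler_wpM2l; [exact: ltW|exact: ltW].
rewrite /K in hK.
lra.
Qed.

End Bad.
End Walk.



Section Per.
Variables (R : realType) (m : nat) (p : int -> R).
Hypothesis m0 : (0 < m)%N.
Hypothesis hper : forall j : int, p (j + (Posz m)) = p j.

Lemma p_addk (k : nat) j : p (j + k%:Z * m%:Z) = p j.
Proof.
elim: k j => [|k IH] j; first by rewrite mul0r addr0.
have -> : j + (k.+1)%:Z * m%:Z = (j + k%:Z * m%:Z) + m%:Z.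
  by rewrite -addn1 PoszD mulrDl mul1r addrA.
by rewrite hper IH.
Qed.

Lemma p_mod z : p z = p (z %% m)%Z.
Proof.
have e := divz_eq z m%:Z.
case E : (z %/ m)%Z e => [k|k] e.
  by rewrite {1}e addrC p_addk.
have : (z %% m)%Z = z + (k.+1)%:Z * m%:Z.
  rewrite {2}e NegzE mulNr; ring.
move=> ->; by rewrite p_addk.
Qed.

End Per.

Theorem theorem5p1 (R : realType) (d : measure_display) (T : measurableType d)
  (P : probability T R) (m : nat) (p : int -> R) (S : nat -> T -> int) :
  (0 < m)%N ->
  (forall j : int, p (j + (Posz m)) = p j) ->
  (forall j : int, 0 < p j < 1) ->
  is_modm_walk P p S ->
  {ae P, forall t,
     (fun n : nat => (S n t)%:~R / n%:R : R) @ \oo --> modm_drift m p}.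
Proof.
move=> m0 hper p01s hW.
have p01 : forall z, 0 <= p z <= 1.
  by move=> z; have /andP[a b] := p01s z; rewrite ltW // ltW.
have [hv hhv] := @poisson R m p m0 p01s.
set c := modm_drift m p.
pose rz (z : int) : nat := absz (z %% m)%Z.
have rzE : forall z, (z %% m)%Z = Posz (rz z).
  move=> z; rewrite /rz gez0_abs // modz_ge0 //.
  by rewrite eqz_nat -lt0n.
have rzlt : forall z, (rz z < m)%N.
  move=> z; rewrite -ltz_nat -rzE ltz_pmod //.
pose H (z : int) : R := hv (inord (rz z)).
pose phi (z : int) : R := z%:~R + H z.
set Hb := \sum_i `|hv i|.
have Hbnd : forall z, `|H z| <= Hb.
  move=> z; rewrite /Hb (bigD1 (inord (rz z))) //= lerDl sumr_ge0 //.
have prz : forall z, p z = p (Posz (rz z)) by move=> z; rewrite -rzE -(@p_mod R m p hper).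
have mN : (0 < m.-1.+1)%N by [].
have rzN : forall z, (rz z < m.-1.+1)%N by move=> z; rewrite prednK.
have rz1 : forall z, rz (z + 1) = ((rz z).+1 %% m)%N.
  move=> z; apply/eqP; rewrite -eqz_nat; apply/eqP.
  rewrite -(rzE (z + 1)) -modzDml (rzE z) -modz_nat.
  by rewrite -addn1 PoszD.
have rzm1 : forall z, rz (z - 1) = ((rz z + m).-1 %% m)%N.
  move=> z; apply/eqP; rewrite -eqz_nat; apply/eqP.
  rewrite -(rzE (z - 1)) -modzDml (rzE z) -modz_nat.
  have -> : Posz (rz z + m).-1 = Posz (rz z) - 1 + Posz m.
    have hpos : (0 < rz z + m)%N by rewrite addn_gt0 m0 orbT.
    have -> : Posz (rz z) - 1 + Posz m = Posz (rz z + m) - 1 by rewrite PoszD; ring.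
    move: (rz z + m)%N hpos => [|k] //= _.
    by rewrite -addn1 PoszD addrK.
  by rewrite modzDr.
have Hnxt : forall z, H (z + stp true) = hv (nxt m (inord (rz z))).
  by move=> z; rewrite /H /nxt inordK // rz1.
have Hprv : forall z, H (z + stp false) = hv (prv m (inord (rz z))).
  by move=> z; rewrite /H /prv inordK // rzm1.
have mart : forall y, p y * phi (y + stp true) + (1 - p y) * phi (y + stp false) = phi y + c.
  move=> y; have := hhv (inord (rz y)).
  rewrite /phi Hnxt Hprv inordK // -prz.
  have e1 : ((y + stp true)%:~R : R) = y%:~R + 1 by rewrite intrD.
  have e2 : ((y + stp false)%:~R : R) = y%:~R - 1 by rewrite intrD.
  rewrite e1 e2 /H => h; rewrite -/c in h.
  lra.
set Bc := 1 + 2 * Hb + `|c|.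
have bnd : forall y b, `|phi (y + stp b) - phi y - c| <= Bc.
  move=> y b.
  have hs : -1 <= ((stp b)%:~R : R) <= 1 by case: b => /=; lra.
  have e : phi (y + stp b) - phi y - c = (stp b)%:~R + H (y + stp b) - H y - c.
    by rewrite /phi intrD; ring.
  have /andP[h1 h2] : - Hb <= H (y + stp b) <= Hb by rewrite -ler_norml.
  have /andP[h3 h4] : - Hb <= H y <= Hb by rewrite -ler_norml.
  have /andP[h5 h6] : - `|c| <= c <= `|c| by rewrite -ler_norml.
  move/andP: hs => [h7 h8].
  rewrite e ler_norml /Bc; apply/andP; split; lra.
have phiH : forall z, `|phi z - z%:~R| <= Hb.
  by move=> z; have -> : phi z - z%:~R = H z by rewrite /phi; ring.
have B := fun z0 => @bad_negl R d T P p S hW z0 p01 phi c Bc mart bnd Hb phiH.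
have NP := negligible_bigcup (fun k : nat => B (Posz k)).
have NN := negligible_bigcup (fun k : nat => B (Negz k)).
apply: (negligibleS _ (negligibleU NP NN)) => t /= hnc.
case E : (S 0 t) => [k|k]; [left|right]; exists k => //; split => //.

Qed.
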